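(* Let $(\mathcal A,\phi)$ be a noncommutative probability space with an exchangeability system whose copies are indexed by $k\in\{0,1,2,\dots\}$, and let $X_1,\dots,X_n\in\mathcal A$. Then $$\phi(X_1X_2\cdots X_n)=\sum_{\substack{A\subseteq[n]\\ 1\in A}}\frac{1}{|A|}\,\tilde\phi(X_1^{A,\omega}X_2^{A,\omega}\cdots X_n^{A,\omega}),$$ where for each $A$, $\omega$ is a primitive root of unity of order $|A|$ and $X_j^{A,\omega}=\sum_{k=1}^{|A|}\omega^kX_j^{(k)}$ if $j\in A$, and $X_j^{A,\omega}=X_j^{(0)}$ if $j\notin A$.
   Context: A noncommutative probability space is a pair $(\mathcal A,\phi)$ of a complex unital algebra $\mathcal A$ and a unital linear functional $\phi$. An exchangeability system for $(\mathcal A,\phi)$ here consists of a noncommutative probability space $(\mathcal U,\tilde\phi)$ and a family $(\iota_k)_{k\ge0}$ of embeddings (injective unital algebra homomorphisms) $\iota_k:\mathcal A\to\mathcal U$ with $\tilde\phi\circ\iota_k=\phi$; write $X^{(k)}=\iota_k(X)$. It is required that for all $X_1,\dots,X_n\in\mathcal A$, all indices $i_1,\dots,i_n\ge0$ and every bijection $\sigma$ of $\{0,1,2,\dots\}$, $\tilde\phi(X_1^{(i_1)}\cdots X_n^{(i_n)})=\tilde\phi(X_1^{(\sigma(i_1))}\cdots X_n^{(\sigma(i_n))})$. *)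

(* Defs.v *)
From mathcomp Require Import all_boot all_algebra.
From mathcomp Require Import reals.
From mathcomp Require Import complex.
Import GRing.Theory.
Set Implicit Arguments. Unset Strict Implicit. Unset Printing Implicit Defensive.
Local Open Scope ring_scope.

Definition unital_functional (R : realType) (A : algType R[i]) (phi : A -> R[i]^o) :=
  linear phi /\ phi 1 = 1.

Definition exchangeability_system (R : realType) (A U : algType R[i])
    (phi : A -> R[i]^o) (phit : U -> R[i]^o) (iota : nat -> {lrmorphism A -> U}) :=
  [/\ unital_functional phit,
      (forall k, injective (iota k)),
      (forall k (x : A), phit (iota k x) = phi x) &
      (forall (m : nat) (X : 'I_m -> A) (idx : 'I_m -> nat) (s : nat -> nat),
          bijective s ->
          phit (\prod_(j < m) iota (idx j) (X j))
          = phit (\prod_(j < m) iota (s (idx j)) (X j)))].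

Definition omega_copy (R : realType) (A U : algType R[i])
    (iota : nat -> {lrmorphism A -> U}) (n : nat) (S : {set 'I_n})
    (omega : R[i]) (x : A) (j : 'I_n) : U :=
  if j \in S then \sum_(1 <= k < #|S|.+1) omega ^+ k *: iota k x
  else iota 0%N x.

(* Main.v *)
Require Import Defs.
From mathcomp Require Import all_boot all_algebra.
From mathcomp Require Import reals.
From mathcomp Require Import complex.
From mathcomp Require Import fingroup perm.
From mathcomp Require Import ring zify.
Import GRing.Theory Num.Theory.
Set Implicit Arguments. Unset Strict Implicit. Unset Printing Implicit Defensive.
Local Open Scope ring_scope.
Section Lin.
Variables (R : realType) (U : algType R[i]) (f : U -> R[i]^o).
Hypothesis Hf : linear f.

Lemma linB x y : f (x - y) = f x - f y.
Proof. exact: (zmod_morphism_linear Hf). Qed.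
Lemma lin0 : f 0 = 0.
Proof. by rewrite -(subrr 0) linB subrr. Qed.
Lemma linD x y : f (x + y) = f x + f y.
Proof.
have hN : f (- y) = - f y by rewrite -sub0r linB lin0 sub0r.
by have := linB x (- y); rewrite opprK hN opprK.
Qed.
Lemma linZ a x : f (a *: x) = a * f x.
Proof. exact: (scalable_linear Hf). Qed.
Lemma lin_sum (I : Type) (r : seq I) (P : pred I) (G : I -> U) :
  f (\sum_(i <- r | P i) G i) = \sum_(i <- r | P i) f (G i).
Proof. exact: (big_morph f linD lin0). Qed.
End Lin.

Lemma sum_ind (M : zmodType) (m V : nat) (G : nat -> M) : (m < V)%N ->
  \sum_(l < V) (if (0 < l)%N && (l <= m)%N then G l else 0) = \sum_(1 <= l < m.+1) G l.
Proof.
move=> hmV.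
rewrite -(big_mkord xpredT (fun l => if (0 < l)%N && (l <= m)%N then G l else 0)).
rewrite (big_cat_nat _ (n:=m.+1)) //=.
rewrite [X in _ + X]big1_seq ?addr0; last first.
  move=> l /andP [_]; rewrite mem_index_iota => /andP [h _].
  by rewrite [(l <= m)%N]leqNgt h andbF.
rewrite big_ltn // /= add0r.
apply: eq_big_seq => l; rewrite mem_index_iota => /andP [h1 h2].
by rewrite h1 -ltnS h2.
Qed.
Section Comb.
Variables (R : realType) (V : nat).
Local Notation C := (R[i]).
Local Notation P := {perm 'I_V.+1}.
Local Notation o := (ord0 : 'I_V.+1).

Definition Zc (u : 'I_V.+1) : C := \sum_(c : P | c u == o) 1.
Definition Qs (psi : 'I_V.+1 -> C) u (S : {set 'I_V.+1}) (w : 'I_V.+1 -> nat) : C :=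
  \sum_(c : P | c u == o) \prod_(r in S) psi (c r) ^+ w r.
Definition sig (psi : 'I_V.+1 -> C) (p : nat) : C := \sum_x psi x ^+ p.

Lemma sum_split_u (u : 'I_V.+1) (S : {set 'I_V.+1}) (g : 'I_V.+1 -> C) : u \notin S ->
  \sum_(t | (t \notin S) && (t != u)) g t = \sum_t g t - \sum_(t in S) g t - g u.
Proof.
move=> uS.
rewrite [\sum_t g t](bigID (fun t => t \in S)) /=.
rewrite [\sum_(t | t \notin S) g t](bigD1 u) //=.
ring.
Qed.

Lemma Qrec (psi : 'I_V.+1 -> C) (u r0 : 'I_V.+1) (S : {set 'I_V.+1}) (w : 'I_V.+1 -> nat) : psi o = 0 -> u \notin S -> r0 \in S -> (0 < w r0)%N ->
  ((V.+1)%:R - #|S :\ r0|%:R - 1) * Qs psi u S w =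
  \sum_(c : P | c u == o) (\prod_(r in S :\ r0) psi (c r) ^+ w r) *
      (sig psi (w r0) - \sum_(t in S :\ r0) psi (c t) ^+ w r0).
Proof.
move=> psi0 uS r0S w0.
set S' := S :\ r0.
have uS' : u \notin S' by rewrite in_setD1 (negPf uS) andbF.
have stepA : forall t, t \notin S' -> t != u ->
   Qs psi u S w = \sum_(c : P | c u == o) psi (c t) ^+ w r0 * \prod_(r in S') psi (c r) ^+ w r.
  move=> t tS' tu.
  have ur0 : u != r0 by apply: contraNneq uS => ->.
  rewrite /Qs (reindex_inj (mulgI (tperm r0 t))) /=.
  apply: eq_big => [c|c _].
    by rewrite permM tpermD // eq_sym.
  rewrite (bigD1 r0) //= permM tpermL; congr (_ * _).
  apply: eq_big => [r|r /andP [rS rr0]]; first by rewrite in_setD1 andbC.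
  rewrite permM tpermD //; first by rewrite eq_sym.
  by apply: contraNneq tS' => ->; rewrite /S' in_setD1 rr0.
have -> : (V.+1)%:R - #|S'|%:R - 1 = \sum_(t | (t \notin S') && (t != u)) (1 : C).
  by rewrite sum_split_u // !sumr_const card_ord.

rewrite mulr_suml.
rewrite (eq_bigr (fun t => \sum_(c : P | c u == o) psi (c t) ^+ w r0 * \prod_(r in S') psi (c r) ^+ w r)); last first.
  by move=> t /andP [h1 h2]; rewrite mul1r (stepA t h1 h2).
rewrite exchange_big /=; apply: eq_bigr => c cu.
rewrite -mulr_suml mulrC; congr (_ * _).
rewrite sum_split_u // (eqP cu) psi0 expr0n /= eqn0Ngt w0 /= subr0.
congr (_ - _).
by rewrite /sig [RHS](reindex_inj (@perm_inj _ c)).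
Qed.

Fixpoint beta (z : C) (b : nat) : C :=
  match b with
  | 0 => z / V%:R
  | b'.+1 => - (b'.+1)%:R * beta z b' / (V - b'.+1)%:R
  end.

Lemma kappaE (b : nat) : (b < V)%N ->
  (V.+1)%:R - b%:R - 1 = (V - b)%:R :> C.
Proof.
move=> hb; rewrite natrB ?(ltnW hb) // -addn1 natrD; ring.
Qed.

Lemma card_lt_u (u : 'I_V.+1) (S : {set 'I_V.+1}) : u \notin S -> (#|S| < V.+1)%N.
Proof.
move=> uS; have := max_card (u |: S); rewrite cardsU1 uS card_ord add1n.
by [].
Qed.

Lemma Qval (psi : 'I_V.+1 -> C) (u : 'I_V.+1) (m : nat) :
  psi o = 0 -> (forall p, (0 < p)%N -> (p < m)%N -> sig psi p = 0) ->
  forall b (S : {set 'I_V.+1}) (w : 'I_V.+1 -> nat), #|S| = b.+1 -> u \notin S ->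
  (forall r, r \in S -> (0 < w r)%N) -> (\sum_(r in S) w r)%N = m ->
  Qs psi u S w = beta (Zc u) b * sig psi m.
Proof.
move=> psi0 hsig; elim=> [|b IH] S w hS uS wpos wsum.
  have [r0 S1] := cards1P (introT eqP hS).
  have r0S : r0 \in S by rewrite S1 set11.
  have := Qrec psi0 uS r0S (wpos r0 r0S).
  have -> : S :\ r0 = set0 by rewrite S1 setDv.
  rewrite cards0 subr0.
  move: wsum; rewrite S1 big_set1 => wm.
  rewrite -wm.
  under eq_bigr do rewrite !big_set0 mul1r subr0.
  have hk : (V.+1)%:R - 1 = V%:R :> C by rewrite -addn1 natrD addrK.
  rewrite hk sumr_const => h.
  rewrite /Zc sumr_const.
  have hV : (0 < V)%N.
    by have := card_lt_u uS; rewrite hS.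

  have V0 : V%:R != 0 :> C by rewrite pnatr_eq0 -lt0n.
  apply: (mulfI V0); rewrite h /= -mulr_natr; field; done.
have : (0 < #|S|)%N by rewrite hS.
case/card_gt0P => r0 r0S.
set S' := S :\ r0.
have hS' : #|S'| = b.+1.
  by move: hS; rewrite (cardsD1 r0 S) r0S add1n => -[].
have uS' : u \notin S' by rewrite in_setD1 (negPf uS) andbF.
have hbV : (b.+1 < V)%N.
  by have := card_lt_u uS; rewrite hS.
have := Qrec psi0 uS r0S (wpos r0 r0S).
rewrite (_ : S :\ r0 = S') // hS' (kappaE hbV).
have wsum' : (w r0 + \sum_(r in S') w r)%N = m.
  rewrite -wsum [in RHS](bigD1 r0) //=; congr (_ + _)%N.
  by apply: eq_bigl => r; rewrite in_setD1 andbC.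
have sig0 : sig psi (w r0) = 0.
  apply: hsig; first exact: wpos.
  have : (0 < #|S'|)%N by rewrite hS'.
  case/card_gt0P => r1 r1S'.
  rewrite -wsum' -[X in (X < _)%N]addn0 ltn_add2l (bigD1 r1) //=.
  apply: ltn_addr; apply: wpos.
  by move: r1S'; rewrite in_setD1 => /andP [].
rewrite sig0.
have key : forall t, t \in S' ->
  \sum_(c : P | c u == o) (\prod_(r in S') psi (c r) ^+ w r) * psi (c t) ^+ w r0
  = beta (Zc u) b * sig psi m.
  move=> t tS'.
  set wt := fun r => if r == t then (w r + w r0)%N else w r.
  rewrite -(IH S' wt hS' uS').
  - apply: eq_bigr => c _.
    rewrite (bigD1 t) //= [in RHS](bigD1 t) //= /wt eqxx exprD -mulrA [_ * psi (c t) ^+ _]mulrC mulrA.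
    congr (_ * _); apply: eq_bigr => r /andP [_ rt].
    by rewrite (negPf rt).
  - move=> r rS'; have rS : r \in S by move: rS'; rewrite in_setD1 => /andP [].
    rewrite /wt; case: (r == t); [by rewrite addn_gt0 wpos | exact: wpos].
  - rewrite -wsum' (bigD1 t) //= [in RHS](bigD1 t) //= /wt eqxx.
    rewrite (eq_bigr (fun i => w i)); last by move=> r /andP [_ rt]; rewrite (negPf rt).
    by rewrite addnCA addnA.
under eq_bigr do rewrite sub0r mulrN mulr_sumr.
rewrite sumrN exchange_big /=.
rewrite (eq_bigr (fun t => beta (Zc u) b * sig psi m)); last first.
  by move=> t tS'; rewrite -(key t tS').
rewrite sumr_const hS' => h.
have k0 : (V - b.+1)%:R != 0 :> C by rewrite pnatr_eq0 subn_eq0 -ltnNge.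
apply: (mulfI k0); rewrite h /= -mulr_natr.
field; done.
Qed.

Lemma sum_perm_split (f : P -> C) :
  \sum_(c : P) f c = \sum_(u : 'I_V.+1) \sum_(c : P | c u == o) f c.
Proof.
rewrite (eq_bigr (fun u => \sum_(c : P) if c u == o then f c else 0)); last first.
  by move=> u _; rewrite big_mkcond.
rewrite exchange_big /=; apply: eq_bigr => c _.
rewrite -big_mkcond /=.
rewrite (eq_bigl (fun u => u == (c^-1)%g o)); first by rewrite big_pred1_eq.
move=> u; apply/eqP/eqP => [<-|->]; [by rewrite permK | by rewrite permKV].
Qed.

Lemma Zconst (u : 'I_V.+1) : Zc u = Zc o.
Proof.
rewrite /Zc (reindex_inj (mulgI (tperm u o))) /=.
by apply: eq_bigl => c; rewrite permM tpermL.
Qed.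

Lemma Zc_neq0 : Zc o != 0.
Proof.
rewrite /Zc sumr_const pnatr_eq0 -lt0n; apply/card_gt0P; exists 1%g.
by rewrite unfold_in /= perm1.
Qed.

Lemma geom (z : C) (m : nat) : z ^+ m = 1 -> z != 1 ->
  \sum_(1 <= l < m.+1) z ^+ l = 0.
Proof.
move=> zm z1.
rewrite big_add1 /= big_mkord.
rewrite (eq_bigr (fun l : 'I_m => z * z ^+ l)); last by move=> l _; rewrite exprS.
rewrite -mulr_sumr.
have : (z - 1) * \sum_(i < m) z ^+ i = 0 by rewrite -subrX1 zm subrr.
move/eqP; rewrite mulf_eq0 subr_eq0 (negPf z1) /= => /eqP ->.
by rewrite mulr0.
Qed.
End Comb.

Section M.
Variables (R : realType) (n : nat) (omega : {set 'I_n.+1} -> R[i]).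
Local Notation C := (R[i]).
Local Notation K := {ffun 'I_n.+1 -> 'I_n.+2}.
Local Notation P := {perm 'I_n.+2}.
Local Notation o := (ord0 : 'I_n.+2).

Definition acoef (S : {set 'I_n.+1}) (om : C) (l : nat) (j : 'I_n.+1) : C :=
  if j \in S then (if (0 < l)%N && (l <= #|S|)%N then om ^+ l else 0)
  else (if l == 0%N then 1 else 0).
Definition coef (S : {set 'I_n.+1}) (k : K) : C :=
  \prod_j acoef S (omega S) (k j) j.
Definition Wt (k : K) : C :=
  \sum_(S : {set 'I_n.+1} | ord0 \in S) #|S|%:R^-1 * coef S k.
Definition pc (c : P) (k : K) : K := [ffun j => c (k j)].

Definition Su (k : K) (u : 'I_n.+2) : {set 'I_n.+1} := [set j | k j != u].
Definition psiu (k : K) u (x : 'I_n.+2) : C :=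
  if (0 < x)%N && (x <= #|Su k u|)%N then omega (Su k u) ^+ x else 0.
Definition Ru (k : K) u : {set 'I_n.+2} := (k @: setT) :\ u.
Definition wk (k : K) (r : 'I_n.+2) : nat := #|[set j | k j == r]|.

Lemma coef_other k (c : P) u S : c u = o -> S != Su k u -> coef S (pc c k) = 0.
Proof.
move=> cu hS.
have [j hj] : exists j, (j \in S) != (j \in Su k u).
  apply/existsP; apply: contraNT hS => /existsPn h.
  by apply/eqP/setP => j; move: (h j) => /negPn/eqP.
rewrite /coef (bigD1 j) //= ffunE.
have -> : acoef S (omega S) (c (k j)) j = 0; last by rewrite mul0r.
move: hj; rewrite /acoef /Su inE.
case: (j \in S) => /=.
  rewrite negbK => /eqP ->; rewrite cu /=; done.
move=> kju; case: eqP => // h.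
have : c (k j) = c u by apply: val_inj; rewrite /= h cu.
by move/perm_inj => e; move: kju; rewrite e eqxx.
Qed.

Lemma coef_Su k (c : P) u : c u = o ->
  coef (Su k u) (pc c k) = \prod_(r in Ru k u) psiu k u (c r) ^+ wk k r.
Proof.
move=> cu.
rewrite /coef (bigID (fun j => j \in Su k u)) /=.
rewrite [X in _ * X]big1 ?mulr1; last first.
  move=> j hj; rewrite /acoef (negPf hj) ffunE.
  by move: hj; rewrite /Su inE negbK => /eqP ->; rewrite cu.
rewrite (eq_bigr (fun j => psiu k u (c (k j)))); last first.
  by move=> j jS; rewrite ffunE /acoef jS.
rewrite (partition_big (fun j => k j) (fun r => r \in Ru k u)) /=; last first.
  by move=> j; rewrite /Su /Ru !inE => ->; rewrite imset_f.
apply: eq_bigr => r; rewrite /Ru in_setD1 => /andP [ru _].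
rewrite (eq_bigr (fun _ => psiu k u (c r))); last by move=> j /andP [_ /eqP ->].
rewrite -prodr_const /wk; apply: eq_bigl => j.
rewrite /Su !inE; case: (k j =P r) => [->|]; by rewrite ?ru ?andbF ?andbT.
Qed.

Lemma Wt_pc k (c : P) u : c u = o ->
  Wt (pc c k) = if u == k ord0 then 0
     else #|Su k u|%:R^-1 * \prod_(r in Ru k u) psiu k u (c r) ^+ wk k r.
Proof.
move=> cu; rewrite /Wt; case: eqP => [e|ne].
  apply: big1 => S oS; rewrite (coef_other (u:=u)) ?mulr0 //.
  by apply: contraTneq oS => ->; rewrite /Su inE e eqxx.
have oS : ord0 \in Su k u by rewrite /Su inE eq_sym; apply/eqP.
rewrite (bigD1 (Su k u)) //= big1 ?addr0; first by rewrite coef_Su.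
by move=> S /andP [_ hS]; rewrite (coef_other (u:=u)) ?mulr0.
Qed.

Lemma wk_sum k u : (\sum_(r in Ru k u) wk k r)%N = #|Su k u|.
Proof.
rewrite -sum1_card (partition_big (fun j => k j) (fun r => r \in Ru k u)) /=; last first.
  by move=> j; rewrite /Su /Ru !inE => ->; rewrite imset_f.
apply: eq_bigr => r; rewrite /Ru in_setD1 => /andP [ru _].
rewrite /wk -sum1_card; apply: eq_bigl => j.
rewrite /Su !inE; case: (k j =P r) => [->|]; by rewrite ?ru ?andbF ?andbT.
Qed.

Lemma wk_pos k u r : r \in Ru k u -> (0 < wk k r)%N.
Proof.
rewrite /Ru in_setD1 => /andP [_ /imsetP [j _ ->]].
by apply/card_gt0P; exists j; rewrite inE.
Qed.

Lemma sig_psiu k u p : (0 < p)%N ->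
  sig (psiu k u) p = \sum_(1 <= l < #|Su k u|.+1) (omega (Su k u) ^+ p) ^+ l.
Proof.
move=> p0; rewrite /sig -(@sum_ind _ _ n.+2); last first.
  by rewrite ltnS; apply: (leq_trans (max_card _)); rewrite card_ord.
apply: eq_bigr => x _; rewrite /psiu.
case: ifP => _; first by rewrite exprAC.
by rewrite expr0n; case: p p0.
Qed.

Lemma sig_psiu0 k u p : ord0 \in Su k u ->
  #|Su k u|.-primitive_root (omega (Su k u)) ->
  (0 < p)%N -> (p < #|Su k u|)%N -> sig (psiu k u) p = 0.
Proof.
move=> oS pr p0 pm; rewrite sig_psiu //; apply: geom.
  by rewrite exprAC (prim_expr_order pr) expr1n.
rewrite -(prim_order_dvd pr); apply/negP => /dvdn_leq; rewrite p0 => /(_ isT).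
by rewrite leqNgt pm.
Qed.

Lemma sig_psium k u : ord0 \in Su k u ->
  #|Su k u|.-primitive_root (omega (Su k u)) ->
  sig (psiu k u) #|Su k u| = #|Su k u|%:R.
Proof.
move=> oS pr; rewrite sig_psiu; last by apply/card_gt0P; exists ord0.
rewrite prim_expr_order // big_add1 /=.
under eq_bigr do rewrite expr1n.
by rewrite sumr_const_nat subn0.
Qed.

Hypothesis Homega : forall S : {set 'I_n.+1}, ord0 \in S -> #|S|.-primitive_root (omega S).

Lemma inner_u k u :
  \sum_(c : P | c u == o) Wt (pc c k) =
  if u == k ord0 then 0 else beta n.+1 (Zc R o) (#|Ru k u|.-1).
Proof.
rewrite (eq_bigr (fun c : P => if u == k ord0 then 0
     else #|Su k u|%:R^-1 * \prod_(r in Ru k u) psiu k u (c r) ^+ wk k r)); last first.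
  by move=> c /eqP cu; rewrite (Wt_pc _ cu).
case: eqP => [_|ne]; first by rewrite big1.
have oS : ord0 \in Su k u by rewrite /Su inE eq_sym; apply/eqP.
have pr := Homega oS.
rewrite -mulr_sumr -/(Qs _ _ _ _).
have kR : k ord0 \in Ru k u by rewrite /Ru in_setD1 eq_sym (introF eqP ne) imset_f.
have hR : #|Ru k u| = (#|Ru k u|.-1).+1 by rewrite prednK //; apply/card_gt0P; exists (k ord0).
rewrite (Qval (m := #|Su k u|) _ _ hR).
- rewrite Zconst sig_psium // mulrC -mulrA mulfV ?mulr1 //.
  by rewrite pnatr_eq0 -lt0n; apply/card_gt0P; exists ord0.
- by rewrite /psiu.
- by move=> p p0 pm; apply: sig_psiu0.
- by rewrite /Ru in_setD1 eqxx.
- by move=> r; apply: wk_pos.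
- exact: wk_sum.
Qed.

Lemma mainM (k : K) :
  \sum_(c : P) Wt (pc c k) = Zc R o * \sum_(v : 'I_n.+2) (k == [ffun => v])%:R.
Proof.
rewrite sum_perm_split.
under eq_bigr do rewrite inner_u.
set z := Zc R o.
set KK := k @: [set: 'I_n.+1].
have kK : k ord0 \in KK by rewrite imset_f.
have hRu : forall u, #|Ru k u| = #|KK :\ u| by [].
under eq_bigr do rewrite hRu.
rewrite (bigID (fun u => u \in KK)) /=.
rewrite (bigD1 (k ord0)) //= eqxx add0r.
rewrite (eq_bigr (fun _ => beta n.+1 z (#|KK|.-2))); last first.
  move=> u /andP [uK uk]; rewrite (negPf uk).
  by rewrite (cardsD1 u KK) uK add1n.
rewrite [X in _ + X](eq_bigr (fun _ => beta n.+1 z (#|KK|.-1))); last first.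
  move=> u uK; have -> : (u == k ord0) = false by apply: contraNF uK => /eqP ->.
  by rewrite (cardsD1 u KK) (negPf uK) add0n.
rewrite (eq_bigl (fun u => u \in KK :\ k ord0)); last by move=> u; rewrite in_setD1 andbC.
rewrite [X in _ + X](eq_bigl (fun u => u \in ~: KK)); last by move=> u; rewrite in_setC.
rewrite !sumr_const.
have hKc : #|~: KK| = (n.+2 - #|KK|)%N by move: (cardsC KK); rewrite card_ord; lia.
have hKd : #|KK :\ k ord0| = #|KK|.-1 by rewrite (cardsD1 (k ord0) KK) kK.
have bpos : (0 < #|KK|)%N by apply/card_gt0P; exists (k ord0).
have ble : (#|KK| <= n.+1)%N by have := leq_imset_card k [set: 'I_n.+1]; rewrite cardsT card_ord.
rewrite hKc hKd.
case hb : #|KK| => [|[|b']]; first by rewrite hb in bpos.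
-
  have [x Kx] := cards1P (introT eqP hb).
  have kc : forall j, k j = k ord0.
    move=> j; have : k j \in KK by rewrite imset_f.
    by rewrite Kx inE => /eqP ->; move: kK; rewrite Kx inE => /eqP ->.
  rewrite /= subn1 /= mulr0n add0r.
  rewrite (eq_bigr (fun v => if v == k ord0 then 1 else 0)); last first.
    move=> v _; case: (v =P k ord0) => [->|ne].
      by rewrite (_ : k == _) //; apply/eqP/ffunP => j; rewrite ffunE kc.
    case: eqP => // e; case: ne; by rewrite e ffunE.
  rewrite -big_mkcond /= big_pred1_eq mulr1.
  have n0 : (n.+1)%:R != 0 :> C by rewrite pnatr_eq0.
  have -> : z / n.+1%:R *+ n.+1 = z / n.+1%:R * n.+1%:R by rewrite mulr_natr.
  by rewrite divfK.
-
  have -> : \sum_(v < n.+2) (k == [ffun=> v])%:R = 0 :> C.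
    apply: big1 => v _; case: eqP => // e.
    have : #|KK| = 1%N.
      rewrite /KK e (_ : [ffun=> v] @: _ = [set v]) ?cards1 //.
      apply/setP => x; rewrite inE; apply/imsetP/eqP => [[j _ ->]|->].
        by rewrite ffunE.
      by exists ord0; rewrite ?ffunE.
    by rewrite hb.
  rewrite mulr0 /= subSS.
  rewrite hb in ble.
  have k0 : (n - b')%:R != 0 :> C by rewrite pnatr_eq0 subn_eq0 -ltnNge.
  rewrite !subSS; move: (beta n.+1 z b') => x.
  field; done.
Qed.
End M.

Section Final.
Variables (R : realType) (A U : algType R[i])
    (phi : A -> R[i]^o) (phit : U -> R[i]^o) (iota : nat -> {lrmorphism A -> U}).
Hypothesis Hexch : exchangeability_system phi phit iota.
Variables (n : nat) (X : 'I_n.+1 -> A) (omega : {set 'I_n.+1} -> R[i]).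
Local Notation C := (R[i]).
Local Notation K := {ffun 'I_n.+1 -> 'I_n.+2}.
Local Notation P := {perm 'I_n.+2}.
Local Notation o := (ord0 : 'I_n.+2).

Definition Fk (k : K) : C := phit (\prod_(j < n.+1) iota (k j) (X j)).

Lemma expand (S : {set 'I_n.+1}) :
  \prod_(j < n.+1) omega_copy iota S (omega S) (X j) j
  = \sum_(k : K) coef omega S k *: \prod_(j < n.+1) iota (k j) (X j).
Proof.
rewrite (eq_bigr (fun j => \sum_(l : 'I_n.+2) acoef S (omega S) l j *: iota l (X j))); last first.
  move=> j _; rewrite /omega_copy /acoef; case: ifP => jS.
    rewrite -(@sum_ind _ #|S| n.+2 (fun l => omega S ^+ l *: iota l (X j))); last first.
      by rewrite ltnS; apply: (leq_trans (max_card _)); rewrite card_ord.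
    by apply: eq_bigr => l _; case: ifP => _; rewrite ?scale0r.
  rewrite (bigD1 ord0) //= scale1r big1 ?addr0 // => l ne.
  by rewrite ifN ?scale0r //; apply: contra ne => /eqP h; apply/eqP/val_inj.
rewrite bigA_distr_bigA; apply: eq_bigr => k _.
by rewrite scaler_prod.
Qed.

Lemma Finv (c : P) (k : K) : Fk (pc c k) = Fk k.
Proof.
case: Hexch => _ _ _ H4.
pose s := fun x => if (x < n.+2)%N then val (c (inord x)) else x.
pose s' := fun x => if (x < n.+2)%N then val ((c^-1)%g (inord x)) else x.
have bij : bijective s.
  exists s' => x; rewrite /s /s' /=; case: (ltnP x n.+2) => hx.
  - by rewrite ltn_ord inord_val permK inordK.
  - by rewrite ltnNge hx.
  - by rewrite ltn_ord inord_val permKV inordK.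
  - by rewrite ltnNge hx.
rewrite /Fk (H4 n.+1 X (fun j => k j : nat) s bij).
congr (phit _); apply: eq_bigr => j _.
by rewrite /s ltn_ord inord_val ffunE.
Qed.
End Final.

Unset Implicit Arguments.
Theorem proposition3p9 (R : realType) (A U : algType R[i])
    (phi : A -> R[i]^o) (phit : U -> R[i]^o) (iota : nat -> {lrmorphism A -> U})
    (Hphi : unital_functional phi)
    (Hexch : exchangeability_system phi phit iota)
    (n : nat) (X : 'I_n.+1 -> A)
    (omega : {set 'I_n.+1} -> R[i])
    (Homega : forall S : {set 'I_n.+1}, ord0 \in S -> #|S|.-primitive_root (omega S)) :
  phi (\prod_(j < n.+1) X j)
  = \sum_(S : {set 'I_n.+1} | ord0 \in S)
      (#|S|%:R)^-1 * phit (\prod_(j < n.+1) omega_copy iota S (omega S) (X j) j).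
Proof.
have Hex := Hexch.
case: Hex => [[Hlin _] _ Hcomp _].
set F := Fk phit iota X.
pose k0 : {ffun 'I_n.+1 -> 'I_n.+2} := [ffun => ord0].
have LHS : phi (\prod_(j < n.+1) X j) = F k0.
  rewrite -(Hcomp 0%N) rmorph_prod /F /Fk; congr (phit _).
  by apply: eq_bigr => j _; rewrite ffunE.
rewrite LHS.
have RHS : \sum_(S : {set 'I_n.+1} | ord0 \in S)
      (#|S|%:R)^-1 * phit (\prod_(j < n.+1) omega_copy iota S (omega S) (X j) j)
   = \sum_(k : {ffun 'I_n.+1 -> 'I_n.+2}) Wt omega k * F k.
  rewrite (eq_bigr (fun S : {set 'I_n.+1} => \sum_(k : {ffun 'I_n.+1 -> 'I_n.+2})
        (#|S|%:R)^-1 * coef omega S k * F k)); last first.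
    move=> S _; rewrite expand (lin_sum Hlin) mulr_sumr; apply: eq_bigr => k _.
    by rewrite (linZ Hlin) mulrA.
  rewrite exchange_big /=; apply: eq_bigr => k _.
  by rewrite /Wt mulr_suml.
rewrite RHS.
set z := Zc R (ord0 : 'I_n.+2).
have Pn : \sum_(c : {perm 'I_n.+2}) (1 : R[i]) = (n.+2)%:R * z.
  rewrite sum_perm_split.
  rewrite (eq_bigr (fun _ => z)); last by move=> u _; rewrite -/(Zc R u) Zconst.
  by rewrite sumr_const card_ord mulr_natl.
have Fc : forall v : 'I_n.+2, F [ffun => v] = F k0.
  move=> v; rewrite /F -(@Finv R A U phi phit iota Hexch n X (tperm v ord0)); congr (Fk _ _ _ _).
  by apply/ffunP => j; rewrite !ffunE tpermL.
have key : (n.+2)%:R * z * \sum_(k : {ffun 'I_n.+1 -> 'I_n.+2}) Wt omega k * F k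
    = (n.+2)%:R * z * F k0.
  rewrite -Pn mulr_suml.
  rewrite (eq_bigr (fun c : {perm 'I_n.+2} =>
      \sum_(k : {ffun 'I_n.+1 -> 'I_n.+2}) Wt omega (pc c k) * F k)); last first.
    move=> c _; rewrite mul1r (reindex_inj (h := pc c)); last first.
      move=> k1 k2 /ffunP h; apply/ffunP => j; move: (h j); rewrite !ffunE.
      exact: perm_inj.
    by apply: eq_bigr => k _; rewrite /F (@Finv R A U phi phit iota Hexch).
  rewrite exchange_big /=.
  rewrite (eq_bigr (fun k => F k * (z * \sum_(v : 'I_n.+2) (k == [ffun => v])%:R))); last first.
    by move=> k _; rewrite -mulr_suml mulrC mainM.
  rewrite (eq_bigr (fun k => z * \sum_(v : 'I_n.+2) (k == [ffun => v])%:R * F k)); last first.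
    by move=> k _; rewrite mulrC -mulrA; congr (_ * _); rewrite mulr_suml.
  rewrite -mulr_sumr exchange_big /=.
  rewrite (eq_bigr (fun v => F k0)); last first.
    move=> v _; rewrite (eq_bigr (fun k => if k == [ffun => v] then F k else 0)); last first.
      by move=> k _; case: eqP => _; rewrite ?mul1r ?mul0r.
    by rewrite -big_mkcond /= big_pred1_eq Fc.
  by rewrite sumr_const card_ord -mulr_natr Pn; ring.
apply/esym/(mulfI _ key).
by rewrite mulf_neq0 ?Zc_neq0 // pnatr_eq0.
Qed.
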